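(* Fix integers $m\ge3$ and $n\ge2$. The cycle $C_m$ and the path $P_n$ are strongly disjoint if and only if $m$ is odd and $\gcd(m,n-1)=1$.
   Context: A weight function on finite $U$ is $\alpha:U\times U\to\mathbb{R}$, $\alpha\ge0$, symmetric, summing to $1$; degree $p(u)=\sum_{u'}\alpha(u,u')$; a graph is $(U,\alpha)$. $C_k$ ($k\ge3$) is the cycle on vertices $u_1,\dots,u_k$ with $\alpha(u_i,u_{i\pm1})=1/(2k)$ (indices mod $k$) and all other weights $0$. $P_k$ ($k\ge2$) is the path on $u_1,\dots,u_k$ with $\alpha(u_i,u_{i+1})=\alpha(u_{i+1},u_i)=1/(2(k-1))$ and all other weights $0$. For graphs $(U,\alpha)$, $(V,\beta)$ with degrees $p,q$, a weight joining is a weight function $\gamma$ on $U\times V$ with degree $r(u,v)=\sum_{(u',v')}\gamma((u,v),(u',v'))$ such that $\sum_v r(u,v)=p(u)$, $\sum_u r(u,v)=q(v)$, $p(u)\sum_{\tilde v}\gamma((u,v),(u',\tilde v))=\alpha(u,u')r(u,v)$ and $q(v)\sum_{\tilde u}\gamma((u,v),(\tilde u,v'))=\beta(v,v')r(u,v)$ for all $u,u',v,v'$. The graphs are strongly disjoint if the only weight joining is $\alpha\otimes\beta$, $(\alpha\otimes\beta)((u,v),(u',v'))=\alpha(u,u')\beta(v,v')$. *)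

(* Defs.v *)
From HB Require Import structures.
From mathcomp Require Import all_boot all_order all_algebra.
From mathcomp Require Import reals.
Set Implicit Arguments. Unset Strict Implicit. Unset Printing Implicit Defensive.
Import Order.TTheory GRing.Theory Num.Theory.
Local Open Scope ring_scope.

Section Defs.
Variable R : realType.

Definition weight_fun (U : finType) (a : U -> U -> R) : Prop :=
  (forall u u', 0 <= a u u') /\ (forall u u', a u u' = a u' u) /\
  \sum_(u : U) \sum_(u' : U) a u u' = 1.

Definition deg (U : finType) (a : U -> U -> R) (u : U) : R :=
  \sum_(u' : U) a u u'.

(* cycle C_m on vertices 'I_m (u_{i+1} <-> i), weights 1/(2m) between i and i+1 mod m *)
Definition cycle_w (m : nat) : 'I_m -> 'I_m -> R :=
  fun i j => if ((i.+1 %% m)%N == j) || ((j.+1 %% m)%N == i)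
             then (2 * m%:R)^-1 else 0.

Definition path_w (n : nat) : 'I_n -> 'I_n -> R :=
  fun i j => if (i.+1 == j :> nat) || (j.+1 == i :> nat)
             then (2 * (n - 1)%:R)^-1 else 0.

Definition product_w (U V : finType) (a : U -> U -> R) (b : V -> V -> R)
  : U * V -> U * V -> R := fun x y => a x.1 y.1 * b x.2 y.2.

Definition weight_joining (U V : finType) (a : U -> U -> R) (b : V -> V -> R)
  (g : U * V -> U * V -> R) : Prop :=
  weight_fun g /\
  (forall u, \sum_(v : V) deg g (u, v) = deg a u) /\
  (forall v, \sum_(u : U) deg g (u, v) = deg b v) /\
  (forall u v u', deg a u * \sum_(v' : V) g (u, v) (u', v') = a u u' * deg g (u, v)) /\
  (forall u v v', deg b v * \sum_(u' : U) g (u, v) (u', v') = b v v' * deg g (u, v)).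

Definition strongly_disjoint (U V : finType) (a : U -> U -> R) (b : V -> V -> R) : Prop :=
  forall g, weight_joining a b g -> g = product_w a b.

End Defs.

Arguments cycle_w : clear implicits.
Arguments path_w : clear implicits.

(* Main.v *)
Require Import Defs.
From HB Require Import structures.
From mathcomp Require Import all_boot all_order all_algebra.
From mathcomp Require Import reals.
From mathcomp Require Import trigo.
From mathcomp Require Import ring lra zify.
From Stdlib Require Import FunctionalExtensionality.
Import Order.TTheory GRing.Theory Num.Theory.
Local Open Scope ring_scope.


Section Orth.
Variables (R : realType) (T : finType) (b : T -> T -> R).
Lemma bip_orth (chi : T -> R) : (forall v v', b v v' = b v' v) ->
  (forall v v', b v v' != 0 -> chi v' = - chi v) ->
  \sum_(v : T) deg b v * chi v = 0.
Proof.
move=> bS hc.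
have e : \sum_(v : T) deg b v * chi v = - \sum_(v : T) deg b v * chi v.
  rewrite {1}/deg; under eq_bigr do rewrite mulr_suml.
  transitivity (\sum_(v : T) \sum_(v' : T) - (b v' v * chi v')).
    apply: eq_bigr => v _; apply: eq_bigr => v' _.
    have [e|nz] := eqVneq (b v v') 0; first by rewrite e (bS v' v) e !mul0r oppr0.
    by rewrite (hc _ _ nz) bS mulrN opprK.
  rewrite exchange_big /= -sumrN; apply: eq_bigr => v' _.
  by rewrite sumrN.
move: e; set S := \sum_(v : T) _; move=> e; lra.
Qed.


Lemma eig_orth (g : T -> R) (l : R) : (forall v v', b v v' = b v' v) ->
  (forall v, \sum_(v' : T) b v v' * g v' = l * deg b v * g v) -> l != 1 ->
  \sum_(v : T) deg b v * g v = 0.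
Proof.
move=> bS eg l1.
have e : l * \sum_(v : T) deg b v * g v = \sum_(v : T) deg b v * g v.
  rewrite mulr_sumr; under eq_bigr do rewrite mulrA -eg.
  rewrite exchange_big /=; apply: eq_bigr => v' _.
  by rewrite /deg mulr_suml; apply: eq_bigr => v _; rewrite bS.
apply/eqP; move: e => /eqP; rewrite -subr_eq0 -{2}[\sum_(v : T) _]mul1r -mulrBl mulf_eq0 subr_eq0 (negbTE l1) //.
Qed.

End Orth.

Section Generic.
Variables (R : realType) (U V : finType) (a : U -> U -> R) (b : V -> V -> R).

Lemma degE (g : U * V -> U * V -> R) x :
  deg g x = \sum_(u' : U) \sum_(v' : V) g x (u', v').
Proof. by rewrite /deg pair_big /=; apply: eq_bigr => -[]. Qed.

Lemma identE g : weight_joining a b g ->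
  (forall u, deg a u != 0) -> (forall v, deg b v != 0) ->
  forall u0 v0, \sum_(v : V) b v v0 * (deg g (u0, v) / deg b v) =
                \sum_(u : U) a u u0 * (deg g (u, v0) / deg a u).
Proof.
move=> [[g0 [gs g1]] [_ [_ [HU HV]]]] pn qn u0 v0.
have L : forall v, b v v0 * (deg g (u0, v) / deg b v) =
   \sum_(u' : U) g (u0, v) (u', v0).
  move=> v; rewrite mulrA -HV mulrC mulrA mulVf ?mul1r //.
have L2 : forall u, a u u0 * (deg g (u, v0) / deg a u) =
   \sum_(v : V) g (u, v0) (u0, v).
  move=> u; rewrite mulrA -HU mulrC mulrA mulVf ?mul1r //.
rewrite (eq_bigr _ (fun v _ => L v)) exchange_big /=.
apply: eq_bigr => u _; rewrite L2; apply: eq_bigr => v _; exact: gs.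
Qed.

Lemma part2 (g : U * V -> U * V -> R) (lv : V -> nat) :
  (forall u u', a u u' = a u' u) -> (forall v v', b v v' = b v' v) ->
  weight_joining a b g ->
  (forall u, deg a u != 0) -> (forall v, deg b v != 0) ->
  (forall u v, deg g (u, v) = deg a u * deg b v) ->
  (forall v v', b v v' != 0 -> lv v' = (lv v).+1 \/ lv v = (lv v').+1) ->
  injective lv ->
  g = product_w a b.
Proof.
move=> aS bS [[g0 [gs g1]] [_ [_ [HU HV]]]] pn qn rE hl linj.
pose d x y := g x y - product_w a b x y.
have ds : forall x y, d x y = d y x.
  move=> x y; rewrite /d gs /product_w aS bS //.
have supp : forall u v u' v', b v v' = 0 -> d (u, v) (u', v') = 0.
  move=> u v u' v' b0; rewrite /d /product_w /= b0 mulr0 subr0.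
  have := HV u v v'; rewrite b0 mul0r => /eqP; rewrite mulf_eq0 (negbTE (qn v)) /=.
  move=> /eqP H; apply: (psumr_eq0P _ H) => // i _; exact: g0.
have rows : forall u v u', \sum_(v' : V) d (u, v) (u', v') = 0.
  move=> u v u'; rewrite /d sumrB /product_w /= -mulr_sumr.
  have := HU u v u'; rewrite rE mulrCA => /(mulfI (pn u)) ->.
  by rewrite /deg subrr.
have main : forall k, forall v, (lv v < k)%N -> forall u u' v', d (u, v) (u', v') = 0.
  elim=> [//|k IH] v; rewrite ltnS leq_eqVlt => /orP [/eqP hv|]; last exact: IH.
  have other : forall u u' v', lv v' != k.+1 -> d (u, v) (u', v') = 0.
    move=> u u' v' hv'; have [b0|bn] := eqVneq (b v v') 0; first exact: supp.
    case: (hl _ _ bn) => [e|e]; first by rewrite e hv eqxx in hv'.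
    by rewrite ds; apply: IH; rewrite -hv e.
  move=> u u' v'; have [e|ne] := eqVneq (lv v') k.+1; last exact: other.
  have := rows u v u'; rewrite (bigD1 v') //= big1 ?addr0 //.
  move=> w hw; apply: other; rewrite -e; apply/eqP => /linj /eqP; exact/negP.
apply: functional_extensionality => -[u v]; apply: functional_extensionality => -[u' v'].
apply/eqP; rewrite -subr_eq0; apply/eqP; exact: (main (lv v).+1 v (ltnSn _)).
Qed.

Lemma join_build (c : U * V -> U * V -> R) (rho : U * V -> R) :
  (forall u u', 0 <= a u u') -> (forall v v', 0 <= b v v') ->
  (forall x y, 0 <= c x y) ->
  (forall x y, a x.1 y.1 * b x.2 y.2 * c x y = a y.1 x.1 * b y.2 x.2 * c y x) ->
  (forall u v u', \sum_(v' : V) a u u' * b v v' * c (u, v) (u', v') = a u u' * deg b v * rho (u, v)) ->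
  (forall u v v', \sum_(u' : U) a u u' * b v v' * c (u, v) (u', v') = b v v' * deg a u * rho (u, v)) ->
  (forall u, \sum_(v : V) deg b v * rho (u, v) = 1) ->
  (forall v, \sum_(u : U) deg a u * rho (u, v) = 1) ->
  \sum_(u : U) deg a u = 1 ->
  weight_joining a b (fun x y => a x.1 y.1 * b x.2 y.2 * c x y) /\
  (forall x, deg (fun x y => a x.1 y.1 * b x.2 y.2 * c x y) x = deg a x.1 * deg b x.2 * rho x).
Proof.
move=> a0 b0 c0 cs h3 h4 h5 h6 h7.
set G := (fun x y => _).
have dG : forall x, deg G x = deg a x.1 * deg b x.2 * rho x.
  move=> [u v]; rewrite degE /G /=.
  rewrite (eq_bigr _ (fun u' _ => h3 u v u')) -!mulr_suml.
  by rewrite /deg.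
split=> //; split; last split; last split; last split.
- split; first by move=> x y; rewrite /G !mulr_ge0.
  split; first exact: cs.
  transitivity (\sum_(u : U) \sum_(v : V) deg G (u, v)).
    by rewrite [RHS]pair_bigA /=; apply: eq_bigr => -[].
  rewrite -[RHS]h7; apply: eq_bigr => u _.
  rewrite -[RHS]mulr1 -(h5 u) mulr_sumr; apply: eq_bigr => v _.
  by rewrite dG /= mulrA.
- move=> u; rewrite -[RHS]mulr1 -(h5 u) mulr_sumr; apply: eq_bigr => v _.
  by rewrite dG /= mulrA.
- move=> v; rewrite -[RHS]mulr1 -(h6 v) mulr_sumr; apply: eq_bigr => u _.
  by rewrite dG /=; ring.
- move=> u v u'; rewrite /G /= h3 dG /=; ring.
- move=> u v v'; rewrite /G /= h4 dG /=; ring.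
Qed.


Lemma deg_product x : deg (product_w a b) x = deg a x.1 * deg b x.2.
Proof.
rewrite degE /product_w /= mulr_suml; apply: eq_bigr => u' _.
by rewrite mulr_sumr.
Qed.

Lemma not_SD_build (c : U * V -> U * V -> R) (rho : U * V -> R) x0 :
  (forall u u', 0 <= a u u') -> (forall v v', 0 <= b v v') ->
  (forall x y, 0 <= c x y) ->
  (forall x y, a x.1 y.1 * b x.2 y.2 * c x y = a y.1 x.1 * b y.2 x.2 * c y x) ->
  (forall u v u', \sum_(v' : V) a u u' * b v v' * c (u, v) (u', v') = a u u' * deg b v * rho (u, v)) ->
  (forall u v v', \sum_(u' : U) a u u' * b v v' * c (u, v) (u', v') = b v v' * deg a u * rho (u, v)) ->
  (forall u, \sum_(v : V) deg b v * rho (u, v) = 1) ->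
  (forall v, \sum_(u : U) deg a u * rho (u, v) = 1) ->
  \sum_(u : U) deg a u = 1 ->
  deg a x0.1 * deg b x0.2 != 0 -> rho x0 != 1 ->
  ~ strongly_disjoint a b.
Proof.
move=> a0 b0 c0 cs h3 h4 h5 h6 h7 nz r1 SD.
have [J D] := @join_build c rho a0 b0 c0 cs h3 h4 h5 h6 h7.
have E := SD _ J.
have := D x0; rewrite E deg_product => /eqP.
rewrite -subr_eq0 -{1}[_ * _]mulr1 -mulrBr mulf_eq0 (negbTE nz) /= subr_eq0 => /eqP e.
by move: r1; rewrite -e eqxx.
Qed.

Hypotheses (a0 : forall u u', 0 <= a u u') (b0 : forall v v', 0 <= b v v')
  (aS : forall u u', a u u' = a u' u) (bS : forall v v', b v v' = b v' v)
  (sa : \sum_(u : U) deg a u = 1) (sb : \sum_(v : V) deg b v = 1).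

Lemma parity_not_SD (chiU : U -> R) (chiV : V -> R) u0 v0 :
  (forall u, chiU u ^+ 2 = 1) -> (forall v, chiV v ^+ 2 = 1) ->
  (forall u u', a u u' != 0 -> chiU u' = - chiU u) ->
  (forall v v', b v v' != 0 -> chiV v' = - chiV v) ->
  deg a u0 * deg b v0 != 0 ->
  ~ strongly_disjoint a b.
Proof.
move=> cU cV hU hV nz.
pose rho (x : U * V) := 1 + chiU x.1 * chiV x.2.
have pm : forall x, (chiU x.1 * chiV x.2 == 1) || (chiU x.1 * chiV x.2 == -1).
  by move=> x; rewrite -sqrf_eq1 exprMn cU cV mulr1.
apply: (@not_SD_build (fun x y => rho x) rho (u0, v0)) => //.
- move=> x y; rewrite /rho; case/orP: (pm x) => /eqP ->; lra.
- move=> [u v] [u' v'] /=; rewrite aS bS.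
  have [e|n1] := eqVneq (a u' u) 0; first by rewrite e !mul0r.
  have [e|n2] := eqVneq (b v' v) 0; first by rewrite e !mulr0 !mul0r.
  rewrite /rho /= (hU _ _ n1) (hV _ _ n2) mulrNN //.
- move=> u v u'; rewrite -mulr_suml -mulr_sumr //.
- move=> u v v'; rewrite -mulr_suml; congr (_ * _); rewrite -mulr_suml mulrC //.
- move=> u; rewrite /rho /=; under eq_bigr do rewrite mulrDr mulr1 mulrCA.
  by rewrite big_split /= sb -mulr_sumr bip_orth // mulr0 addr0.
- move=> v; rewrite /rho /=; under eq_bigr do rewrite mulrDr mulr1 mulrA.
  by rewrite big_split /= sa -mulr_suml bip_orth ?mul0r ?addr0.
- rewrite /rho /=; case/orP: (pm (u0, v0)) => /eqP ->.
    by rewrite -subr_eq0 addrK oner_eq0.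
  by rewrite subrr eq_sym oner_eq0.
Qed.


Lemma norm_mul1 {x y : R} : `|x| <= 1 -> `|y| <= 1 -> `|x * y| <= 1.
Proof. by move=> hx hy; rewrite normrM mulr_ile1. Qed.

Lemma eigen_not_SD (f : U -> R) (g : V -> R) (l : R) u0 v0 :
  (forall u, `|f u| <= 1) -> (forall v, `|g v| <= 1) -> `|l| <= 1 ->
  l ^+ 2 != 1 ->
  (forall u, \sum_(u' : U) a u u' * f u' = l * deg a u * f u) ->
  (forall v, \sum_(v' : V) b v v' * g v' = l * deg b v * g v) ->
  f u0 * g v0 != 0 ->
  deg a u0 * deg b v0 != 0 ->
  ~ strongly_disjoint a b.
Proof.
move=> fb gb lb l2 ef eg fg0 nz.
have l1 : l != 1 by apply: contra l2 => /eqP ->; rewrite expr1n.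
pose c (x y : U * V) := 1 + (f x.1 * g x.2 + f y.1 * g y.2 - l * (f x.1 * g y.2 + f y.1 * g x.2)) / 4.
pose rho (x : U * V) := 1 + (1 - l ^+ 2) * (f x.1 * g x.2) / 4.
apply: (@not_SD_build c rho (u0, v0)) => //.
- move=> x y; rewrite /c.
  have t1 := norm_mul1 (fb x.1) (gb x.2).
  have t2 := norm_mul1 (fb y.1) (gb y.2).
  have t3 := norm_mul1 lb (norm_mul1 (fb x.1) (gb y.2)).
  have t4 := norm_mul1 lb (norm_mul1 (fb y.1) (gb x.2)).
  move: t1 t2 t3 t4; rewrite !ler_norml => /andP [? ?] /andP [? ?] /andP [? ?] /andP [? ?].
  lra.
- move=> [u v] [u' v'] /=; rewrite aS bS /c /=; congr (_ * _); congr (1 + _ / _).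
  ring.
- move=> u v u'.
  have e : forall v', a u u' * b v v' * c (u, v) (u', v') =
     a u u' * (1 + (f u * g v - l * f u' * g v) / 4) * b v v' + a u u' * ((f u' - l * f u) / 4) * (b v v' * g v').
    by move=> v'; rewrite /c /=; ring.
  rewrite (eq_bigr _ (fun v' _ => e v')) big_split /= -!mulr_sumr eg.
  rewrite (_ : \sum_(v' : V) b v v' = deg b v) // /rho /=; ring.
- move=> u v v'.
  have e : forall u', a u u' * b v v' * c (u, v) (u', v') =
     b v v' * (1 + (f u * g v - l * f u * g v') / 4) * a u u' + b v v' * ((g v' - l * g v) / 4) * (a u u' * f u').
    by move=> u'; rewrite /c /=; ring.
  rewrite (eq_bigr _ (fun u' _ => e u')) big_split /= -!mulr_sumr ef.
  rewrite (_ : \sum_(u' : U) a u u' = deg a u) // /rho /=; ring.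
- move=> u; rewrite /rho /=.
  have e : forall v, deg b v * (1 + (1 - l ^+ 2) * (f u * g v) / 4) =
    deg b v + ((1 - l ^+ 2) * f u / 4) * (deg b v * g v).
    by move=> v; ring.
  by rewrite (eq_bigr _ (fun v _ => e v)) big_split /= sb -mulr_sumr (eig_orth _ _ _ _ _ bS eg l1) mulr0 addr0.
- move=> v; rewrite /rho /=.
  have e : forall u, deg a u * (1 + (1 - l ^+ 2) * (f u * g v) / 4) =
    deg a u + ((1 - l ^+ 2) * g v / 4) * (deg a u * f u).
    by move=> u; ring.
  by rewrite (eq_bigr _ (fun u _ => e u)) big_split /= sa -mulr_sumr (eig_orth _ _ _ _ _ aS ef l1) mulr0 addr0.
- rewrite /rho /= -subr_eq0 addrAC subrr add0r.
  move: fg0; rewrite mulf_eq0 negb_or => /andP [fn gn].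
  rewrite !mulf_neq0 // ?invr_eq0 ?pnatr_eq0 //.
  by rewrite subr_eq0 eq_sym.
Qed.

End Generic.


Section Cyc.
Variable R : realType.
Variable m' : nat.
Local Notation m := m'.+3.

Lemma valS (i : 'I_m) : val (i + 1) = (i.+1 %% m)%N.
Proof. by rewrite /= addn1. Qed.

Lemma Zm_m : (m%:R : 'I_m) = 0.
Proof. by apply: val_inj; rewrite Zp_nat /= modnn. Qed.

Lemma cyc_cond (i j : 'I_m) :
  ((i.+1 %% m)%N == j) || ((j.+1 %% m)%N == i) = (j == i + 1) || (j == i - 1).
Proof.
have e : forall x y : 'I_m, ((x.+1 %% m)%N == y) = (y == x + 1).
  by move=> x y; rewrite eq_sym -val_eqE /= addn1.
by rewrite !e; congr (_ || _); rewrite [RHS]eq_sym subr_eq.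
Qed.

Lemma cyc_ne (i : 'I_m) : (i + 1 == i - 1) = false.
Proof.
apply/negbTE; rewrite -subr_eq0.
have -> : i + 1 - (i - 1) = 1 + 1 by ring.
by rewrite -val_eqE /=.
Qed.

Lemma cycle_wE (i j : 'I_m) :
  cycle_w R m i j = if (j == i + 1) || (j == i - 1) then (2 * m%:R)^-1 else 0.
Proof. by rewrite /cycle_w cyc_cond. Qed.

Lemma cycle_sym (i j : 'I_m) : cycle_w R m i j = cycle_w R m j i.
Proof. by rewrite /cycle_w orbC. Qed.

Lemma cycle_sum (i : 'I_m) (h : 'I_m -> R) :
  \sum_(j : 'I_m) cycle_w R m i j * h j = (2 * m%:R)^-1 * (h (i + 1) + h (i - 1)).
Proof.
rewrite (bigD1 (i + 1)) //= (bigD1 (i - 1)) /=; last by rewrite eq_sym cyc_ne.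
rewrite big1 ?addr0.
  by rewrite !cycle_wE eqxx /= eqxx orbT [in RHS]mulrDr.
move=> j /andP [h1 h2]; rewrite cycle_wE (negbTE h1) (negbTE h2) /= mul0r //.
Qed.

Lemma cycle_deg (i : 'I_m) : deg (cycle_w R m) i = (m%:R)^-1.
Proof.
rewrite /deg; have := cycle_sum i (fun _ => 1); rewrite (eq_bigr (fun j => cycle_w R m i j)); last by move=> j _; rewrite mulr1.
move=> ->; rewrite invfM mulrAC -mulr2n -mulr_natr mulVf ?mul1r //.
by rewrite pnatr_eq0.
Qed.

Lemma cycle_sum1 (i : 'I_m) (h : 'I_m -> R) :
  \sum_(j : 'I_m) cycle_w R m j i * h j = (2 * m%:R)^-1 * (h (i + 1) + h (i - 1)).
Proof. rewrite -(cycle_sum i h); apply: eq_bigr => j _; by rewrite cycle_sym. Qed.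

End Cyc.


Section Path.
Variable R : realType.

Lemma sum_ord_eq (n : nat) (F : nat -> R) k :
  \sum_(j : 'I_n) (if val j == k then F j else 0) = if (k < n)%N then F k else 0.
Proof.
case: ifP => kn.
  rewrite (bigD1 (Ordinal kn)) //= eqxx big1 ?addr0 // => j hj.
  case: eqP => // e; case/negP: hj; apply/eqP/val_inj => //.
by rewrite big1 // => j _; case: eqP => // e; move: (ltn_ord j); rewrite e kn.
Qed.

Variable n : nat.
Local Notation c := (2 * (n - 1)%:R : R)^-1.

Lemma path_sym (i j : 'I_n) : path_w R n i j = path_w R n j i.
Proof. by rewrite /path_w orbC. Qed.

Lemma path_sum (i : 'I_n) (H : nat -> R) :
  \sum_(j : 'I_n) path_w R n i j * H j =
  c * ((if (i.+1 < n)%N then H i.+1 else 0) + (if (0 < i)%N then H i.-1 else 0)).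
Proof.
case: i => [[|i'] hi] /=.
  rewrite addr0 -sum_ord_eq mulr_sumr; apply: eq_bigr => j _.
  by rewrite /path_w /= eq_sym; case: eqP => _; rewrite ?mul0r ?mulr0.
have hi' : (i' < n)%N by apply: ltnW.
have -> : H i' = \sum_(j : 'I_n) (if val j == i' then H j else 0) by rewrite sum_ord_eq hi'.
rewrite -(sum_ord_eq n H i'.+2).
rewrite mulrDr !mulr_sumr -big_split /=; apply: eq_bigr => j _.
rewrite /path_w /= [i'.+2 == j :> nat]eq_sym.
case: eqP => [->|ne1] /=; first by rewrite gtn_eqF // mulr0 addr0.
rewrite eqSS.
case: eqP => [e|ne2]; first by rewrite mulr0 add0r.
by rewrite mul0r mulr0 addr0.
Qed.

Lemma path_deg (i : 'I_n) :
  deg (path_w R n) i = c * ((i.+1 < n)%N%:R + (0 < i)%N%:R).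
Proof.
have := path_sum i (fun _ => 1); rewrite /deg (eq_bigr (fun j => path_w R n i j)); last by move=> j _; rewrite mulr1.
by move=> ->; case: ifP; case: ifP.
Qed.

Lemma path_sum1 (i : 'I_n) (H : nat -> R) :
  \sum_(j : 'I_n) path_w R n j i * H j =
  c * ((if (i.+1 < n)%N then H i.+1 else 0) + (if (0 < i)%N then H i.-1 else 0)).
Proof. rewrite -(path_sum i H); apply: eq_bigr => j _; by rewrite path_sym. Qed.

Hypothesis n2 : (2 <= n)%N.

Lemma c_gt0 : 0 < c.
Proof. rewrite invr_gt0 mulr_gt0 // ltr0n subn_gt0 //. Qed.

Lemma path_deg_gt0 (i : 'I_n) : 0 < deg (path_w R n) i.
Proof.
rewrite path_deg mulr_gt0 ?c_gt0 //.
case: (i : nat) (ltn_ord i) => [|i'] /= hi.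
  by rewrite addr0 n2 ltr01.
by rewrite ltr_wpDl // ltr0n.
Qed.

Lemma path_deg_sum : \sum_(i : 'I_n) deg (path_w R n) i = 1.
Proof.
under eq_bigr do rewrite path_deg.
rewrite -mulr_sumr big_split /=.
case: n n2 => [|[|N]] // _.
have e1 : \sum_(i < N.+2) ((i.+1 < N.+2)%N%:R : R) = N.+1%:R.
  rewrite big_ord_recr /= ltnn addr0 (eq_bigr (fun _ => 1)) ?sumr_const ?card_ord // => i _.
  by rewrite /= ltnS ltn_ord.
have e2 : \sum_(i < N.+2) ((0 < i)%N%:R : R) = N.+1%:R.
  by rewrite big_ord_recl /= add0r (eq_bigr (fun _ => 1)) ?sumr_const ?card_ord.
rewrite e1 e2.
rewrite subn1 /=; field; by rewrite addrC natr1 pnatr_eq0.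
Qed.

End Path.


Section Wave.
Variable R : realType.
Variable m' : nat.
Local Notation m := m'.+3.


Lemma Zm_val (w : 'I_m) : w = (val w)%:R.
Proof. by rewrite natr_Zp. Qed.

Lemma const_shift (f : 'I_m -> R) : (forall w, f (w + 1) = f w) -> forall w, f w = f 0.
Proof.
move=> h w; rewrite (Zm_val w); elim: (val w) => [//|k IH].
by rewrite -natr1 h.
Qed.

Lemma period_shift (f : 'I_m -> R) (s : 'I_m) : (forall w, f (w + s) = f w) ->
  forall k w, f (w + k%:R * s) = f w.
Proof.
move=> h; elim=> [|k IH] w; first by rewrite mul0r addr0.
by rewrite -natr1 mulrDl mul1r addrA h IH.
Qed.

Lemma period_shiftN (f : 'I_m -> R) (s : 'I_m) : (forall w, f (w + s) = f w) ->
  forall w, f (w - s) = f w.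
Proof. by move=> h w; rewrite -(h (w - s)) subrK. Qed.

Lemma sum_shift (f : 'I_m -> R) (s : 'I_m) : \sum_(w : 'I_m) f (w + s) = \sum_(w : 'I_m) f w.
Proof. by rewrite [RHS](reindex_inj (addIr s)). Qed.

Variable N' : nat.
Local Notation N := N'.+1.

Lemma wave (G : 'I_m -> nat -> R) :
  odd m -> coprime m N ->
  (forall u k, (k <= N)%N ->
     ((if (k < N)%N then G u k.+1 else 0) + (if (0 < k)%N then G u k.-1 else 0)) *+ 2 =
     ((k < N)%N%:R + (0 < k)%N%:R) * (G (u + 1) k + G (u - 1) k)) ->
  forall u k, (k <= N)%N -> G u k = G 0 0.
Proof.
move=> om cop H.
pose phi u := G u 0%N.
have form : forall k, (k < N)%N ->
   (forall u, G u k = (phi (u + k%:R) + phi (u - k%:R)) / 2) /\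
   (forall u, G u k.+1 = (phi (u + k.+1%:R) + phi (u - k.+1%:R)) / 2).
  elim=> [_|k IH hk].
    split=> u; first by rewrite /phi addr0 subr0; field.
    have := H u 0%N isT; rewrite ltn0Sn /= !addr0 mul1r => e.
    rewrite -mulr_natr in e.
    by rewrite /phi mulr1n -e; field.
  have [IH1 IH2] := IH (ltnW hk); split; first exact: IH2.
  move=> u; have := H u k.+1 (ltnW hk); rewrite hk /= => e.
  have e2 : G u k.+2 = G (u + 1) k.+1 + G (u - 1) k.+1 - G u k.
    apply: (@mulIf _ 2); first by rewrite pnatr_eq0.
    rewrite -[_ *+ 2]mulr_natr in e.
    lra.
  rewrite e2 !IH2 IH1.
  have a1 : u + 1 + k.+1%:R = u + k.+2%:R by ring.
  have a2 : u + 1 - k.+1%:R = u - k%:R by ring.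
  have a3 : u - 1 + k.+1%:R = u + k%:R by ring.
  have a4 : u - 1 - k.+1%:R = u - k.+2%:R by ring.
  by rewrite a1 a2 a3 a4; field.
have formN : forall k, (k <= N)%N -> forall u, G u k = (phi (u + k%:R) + phi (u - k%:R)) / 2.
  case=> [|k] hk u; first exact: (form 0%N isT).1.
  exact: (form k hk).2.
pose psi w := phi (w + N%:R) - phi (w - N%:R).
have p1 : forall u, psi (u + 1) = psi (u - 1).
  move=> u; have := H u N (leqnn _); rewrite ltnn /= => e.
  have g1 := formN N' (leqnSn _) u.
  have g2 := formN N (leqnn _) (u + 1).
  have g3 := formN N (leqnn _) (u - 1).
  rewrite g1 g2 g3 in e.
  have a1 : u + 1 - N%:R = u - N'%:R by ring.
  have a2 : u - 1 + N%:R = u + N'%:R by ring.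
  rewrite a1 a2 in e; rewrite /psi a1 a2.
  lra.
have p2 : forall w, psi (w + (1 + 1)) = psi w.
  by move=> w; rewrite addrA p1 addrK.
have p3 : forall w, psi (w + 1) = psi w.
  move=> w; have := @period_shift _ _ p2 (m./2).+1 w.
  have -> : ((m./2).+1%:R * (1 + 1) : 'I_m) = 1; last by [].
  have e : ((m./2).+1 * 2 = m + 1)%N.
    have := odd_double_half m; rewrite om -muln2 /=; lia.
  have -> : (1 + 1 : 'I_m) = 2%:R by [].
  by rewrite -natrM e natrD Zm_m add0r.
have p4 : forall w, psi w = 0.
  have c := @const_shift _ p3.
  have : \sum_(w : 'I_m) psi w = 0.
    by rewrite /psi sumrB (sum_shift (fun w => phi w)) (sum_shift (fun w => phi w) (- N%:R)) subrr.
  rewrite (eq_bigr (fun _ => psi 0)); last by move=> w _; rewrite c.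
  rewrite sumr_const card_ord => /eqP; rewrite mulrn_eq0 /= => /eqP h0 w.
  by rewrite c.
have p5 : forall w, phi (w + (N%:R + N%:R)) = phi w.
  move=> w; have := p4 (w + N%:R); rewrite /psi addrK addrA => /eqP.
  by rewrite subr_eq0 => /eqP.
have [a _ ha] := @Bezoutl m (N * 2) isT.
have ea : (a%:R * (N%:R + N%:R) : 'I_m) = -1.
  have : (((1 + a * (N * 2))%N)%:R : 'I_m) = 0.
    apply: val_inj; rewrite Zp_nat /=; apply/eqP.
    have : coprime m (N * 2) by rewrite coprimeMr cop coprimen2 om.
    by move=> /eqP g; move: ha; rewrite g /dvdn.
  rewrite natrD natrM natrM => h.
  by rewrite -[RHS]add0r -h; ring.
have p6 : forall w, phi (w + 1) = phi w.
  move=> w; have := @period_shift _ _ p5 a (w + 1); rewrite ea addrK => <- //.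
have p7 := @const_shift _ p6.
by move=> u k hk; rewrite formN // !p7 /phi; field.
Qed.

End Wave.


Section Trig.
Variable R : realType.
Variable d : nat.
Hypothesis d3 : (3 <= d)%N.

Definition th : R := pi *+ 2 / d%:R.
Definition F (x : R) := cos (th * x).

Lemma dn0 : (d%:R : R) != 0.
Proof. by rewrite pnatr_eq0; case: d d3. Qed.

Lemma cos_per (y : R) q : cos (y + q%:R * pi *+ 2) = cos y.
Proof.
elim: q y => [|q IH] y; first by rewrite mul0r mul0rn addr0.
by rewrite -natr1 mulrDl mul1r mulrnDl addrA cosD2pi IH.
Qed.

Lemma Fper x q : F (x + (q * d)%:R) = F x.
Proof.
rewrite /F mulrDr.
have -> : th * (q * d)%:R = q%:R * pi *+ 2.
  rewrite /th natrM -mulrnAl; field; exact: dn0.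
exact: cos_per.
Qed.

Lemma gper (M k j : nat) : (d %| M)%N -> F ((k %% M + j)%N%:R) = F ((k + j)%N%:R).
Proof.
move=> dM.
have -> : (k + j = (k %% M + j) + (k %/ M * (M %/ d)) * d)%N.
  by rewrite -mulnA divnK //; have := divn_eq k M; lia.
by rewrite [in RHS]natrD Fper.
Qed.

Lemma F_eig x : F (x + 1) + F (x - 1) = cos th *+ 2 * F x.
Proof. by rewrite /F mulrDr mulrBr mulr1 cosD cosB; ring. Qed.

Lemma F0 : F 0 = 1.
Proof. by rewrite /F mulr0 cos0. Qed.

Lemma F1 : F 1 = cos th.
Proof. by rewrite /F mulr1. Qed.

Lemma th_bounds : 0 < th < pi.
Proof.
have dp : (0 : R) < d%:R by rewrite ltr0n; case: d d3.
apply/andP; split; first by rewrite /th divr_gt0 // mulrn_wgt0 // pi_gt0.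
by rewrite /th ltr_pdivrMr // -[pi *+ 2]mulr_natr ltr_pM2l ?pi_gt0 // ltr_nat.
Qed.

Lemma cos_th2 : cos th ^+ 2 != 1.
Proof.
have s := sin_gt0_pi th_bounds.
rewrite cos2sin2 -subr_eq0 addrAC subrr add0r oppr_eq0 expf_neq0 //.
by rewrite gt_eqF.
Qed.

Lemma cos_th_le1 : `|cos th| <= 1.
Proof. exact: cos_max. Qed.

Lemma F_le1 x : `|F x| <= 1.
Proof. exact: cos_max. Qed.

End Trig.



Section Eig.
Variable R : realType.
Variable d : nat.
Hypothesis d3 : (3 <= d)%N.

Lemma gper0 (M k : nat) : (d %| M)%N -> F R d ((k %% M)%N%:R) = F R d (k%:R).
Proof. by move=> h; have := @gper R d d3 M k 0 h; rewrite !addn0. Qed.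

Lemma cyc_eigF (m' : nat) (dm : (d %| m'.+3)%N) (u : 'I_m'.+3) :
  \sum_(u' : 'I_m'.+3) cycle_w R m'.+3 u u' * F R d (val u')%:R =
  cos (th R d) * deg (cycle_w R m'.+3) u * F R d (val u)%:R.
Proof.
rewrite cycle_sum cycle_deg -(subrK 1 u) addrK.
set w := u - 1.
rewrite !valS gper0 // gper0 //.
have := @gper R d d3 m'.+3 w.+1 1 dm; rewrite addn1 => ->.
have e := F_eig R d (w.+1)%:R.
have h1 : ((w.+1)%:R - 1 : R) = w%:R by rewrite -natr1 addrK.
rewrite h1 natr1 in e.
rewrite addn1 e; field; by rewrite -natrD pnatr_eq0.
Qed.

Lemma path_eigF (N' : nat) (dN : (d %| N'.+1)%N) (i : 'I_N'.+2) :
  \sum_(j : 'I_N'.+2) path_w R N'.+2 i j * F R d (val j)%:R =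
  cos (th R d) * deg (path_w R N'.+2) i * F R d (val i)%:R.
Proof.
rewrite (@path_sum R _ i (fun k => F R d k%:R)) path_deg.
case: i => [[|i'] hi] /=.
  by rewrite !addr0 mulr1 F0 F1 mulr1 mulrC.
case: ifP => h.
  have e := F_eig R d (i'.+1)%:R.
  have h1 : ((i'.+1)%:R - 1 : R) = i'%:R by rewrite -natr1 addrK.
  rewrite h1 natr1 in e.
  rewrite e /=; ring.
have ei : i' = N' by move: hi h; rewrite !ltnS; lia.
rewrite ei !add0r mulr1.
have FN : F R d (N'.+1)%:R = 1.
  by have := Fper R d d3 0 (N'.+1 %/ d); rewrite divnK // add0r F0.
have FN' : F R d N'%:R = cos (th R d).
  have := Fper R d d3 (-1) (N'.+1 %/ d); rewrite divnK // -natr1 addrCA addNr addr0 => ->.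
  by rewrite /F mulrN1 cosN.
by rewrite FN FN' mulr1 mulrC.
Qed.

End Eig.

Lemma cycle_ge0 (R : realType) m (i j : 'I_m) : 0 <= cycle_w R m i j.
Proof. by rewrite /cycle_w; case: ifP => _ //; rewrite invr_ge0 mulr_ge0 // ler0n. Qed.

Lemma path_ge0 (R : realType) n (i j : 'I_n) : 0 <= path_w R n i j.
Proof. by rewrite /path_w; case: ifP => _ //; rewrite invr_ge0 mulr_ge0 // ler0n. Qed.

Theorem proposition3p6 (R : realType) (m n : nat) :
  (3 <= m)%N -> (2 <= n)%N ->
  (strongly_disjoint (cycle_w R m) (path_w R n) <->
   odd m /\ gcdn m (n - 1) = 1%N).
Proof.
case: m => [|[|[|m']]] // _.
case: n => [|[|N']] // n2.
rewrite (_ : (N'.+2 - 1 = N'.+1)%N); last by rewrite subn1.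
have a0 : forall u u', 0 <= cycle_w R m'.+3 u u' by move=> u u'; exact: cycle_ge0.
have b0 : forall v v', 0 <= path_w R N'.+2 v v' by move=> v v'; exact: path_ge0.
have aS : forall u u', cycle_w R m'.+3 u u' = cycle_w R m'.+3 u' u by move=> u u'; exact: cycle_sym.
have bS : forall v v', path_w R N'.+2 v v' = path_w R N'.+2 v' v by move=> v v'; exact: path_sym.
have mn0 : (m'.+3%:R : R) != 0 by rewrite pnatr_eq0.
have pa : forall u, deg (cycle_w R m'.+3) u = (m'.+3%:R)^-1 by move=> u; exact: cycle_deg.
have pn : forall u, deg (cycle_w R m'.+3) u != 0 by move=> u; rewrite pa invr_eq0.
have qn : forall v, deg (path_w R N'.+2) v != 0 by move=> v; rewrite gt_eqF // path_deg_gt0.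
have sa : \sum_(u : 'I_m'.+3) deg (cycle_w R m'.+3) u = 1.
  by rewrite (eq_bigr _ (fun u _ => pa u)) sumr_const card_ord -[_ *+ m'.+3]mulr_natr mulVf.
have sb : \sum_(v : 'I_N'.+2) deg (path_w R N'.+2) v = 1 by exact: path_deg_sum.
split.
- move=> SD.
  have g0 : (0 < gcdn m'.+3 N'.+1)%N by rewrite gcdn_gt0.
  case om: (odd m'.+3).
    split => //; apply/eqP; apply/negP => gn.
    set dd := gcdn m'.+3 N'.+1 in g0 gn.
    have d2 : dd != 2%N.
      apply/eqP => e2; have : (2 %| m'.+3)%N by rewrite -e2 dvdn_gcdl.
      by rewrite dvdn2 om.
    have d3 : (3 <= dd)%N by lia.
    apply: (@eigen_not_SD R _ _ _ _ a0 b0 aS bS sa sb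
      (fun u => F R dd (val u)%:R) (fun v => F R dd (val v)%:R) (cos (th R dd)) ord0 ord0) => //.
    + by move=> u; exact: F_le1.
    + by move=> v; exact: F_le1.
    + exact: cos_th_le1.
    + exact: cos_th2.
    + by move=> u; apply: cyc_eigF => //; exact: dvdn_gcdl.
    + by move=> v; apply: path_eigF => //; exact: dvdn_gcdr.
    + by rewrite /= F0 mulr1 oner_eq0.
    + by rewrite mulf_neq0.
  exfalso.
  apply: (@parity_not_SD R _ _ _ _ a0 b0 aS bS sa sb
      (fun u => (-1) ^+ (val u)) (fun v : 'I_N'.+2 => (-1) ^+ (v : nat)) ord0 ord0) => //.
  + by move=> u; rewrite sqrr_sign.
  + by move=> v; rewrite sqrr_sign.
  + have S1 : forall w : 'I_m'.+3, (-1) ^+ (val (w + 1)) = - (-1) ^+ (val w) :> R.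
      by move=> w; rewrite valS -signr_odd odd_mod ?om // signr_odd exprS mulN1r.
    move=> u u'; rewrite cycle_wE; case: ifP => [/orP [/eqP -> | /eqP ->] _ | _]; last by rewrite eqxx.
      exact: S1.
    by rewrite -{2}(subrK 1 u) S1 opprK.
  + move=> v v'; rewrite /path_w; case: ifP => [/orP [/eqP e | /eqP e] _ | _]; last by rewrite eqxx.
      by rewrite -e exprS mulN1r.
    by rewrite -e exprS mulN1r opprK.
  + by rewrite mulf_neq0.
- move=> [om cop] g J.
  have cop' : coprime m'.+3 N'.+1 by rewrite /coprime cop.
  pose G u k := deg g (u, inord k) / deg (path_w R N'.+2) (inord k : 'I_N'.+2).
  have HW : forall u k, (k <= N'.+1)%N ->
     ((if (k < N'.+1)%N then G u k.+1 else 0) + (if (0 < k)%N then G u k.-1 else 0)) *+ 2 =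
     ((k < N'.+1)%N%:R + (0 < k)%N%:R) * (G (u + 1) k + G (u - 1) k).
    move=> u k hk.
    have ik : ((inord k : 'I_N'.+2) : nat) = k by rewrite inordK.
    have E := @identE R _ _ _ _ g J pn qn u (inord k).
    rewrite (eq_bigr (fun v => path_w R N'.+2 v (inord k) * G u (val v))) in E; last first.
      by move=> v _; rewrite /G inord_val.
    rewrite path_sum1 ik cycle_sum1 !pa in E.
    have dg : forall x, deg g (x, inord k) = G x k * deg (path_w R N'.+2) (inord k).
      by move=> x; rewrite /G divfK.
    rewrite !dg path_deg ik !ltnS in E.
    have cn : (2 * (N'.+2 - 1)%:R : R)^-1 != 0 by rewrite invr_eq0 mulf_neq0 // pnatr_eq0 // subn1.
    apply: (mulfI cn); rewrite !ltnS -[(_ + _) *+ 2]mulr_natr mulrA E; field.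
    by rewrite -natrD !pnatr_eq0 subn1.
  have W := @wave R m' N' G om cop' HW.
  set kap := G 0 0 in W.
  have rk : forall u v, deg g (u, v) = kap * deg (path_w R N'.+2) v.
    move=> u v; have := W u (val v) (ltn_ord v); rewrite /G inord_val => <-.
    by rewrite divfK.
  have kp : kap = (m'.+3%:R)^-1.
    have := J.2.2.1 ord0; rewrite (eq_bigr _ (fun u _ => rk u ord0)) sumr_const card_ord => e.
    have e2 : kap * m'.+3%:R = 1.
      apply: (mulIf (qn ord0)); rewrite mul1r -[RHS]e mulrAC mulr_natr //.
    by apply: (mulIf mn0); rewrite e2 mulVf.
  have rE : forall u v, deg g (u, v) = deg (cycle_w R m'.+3) u * deg (path_w R N'.+2) v.
    by move=> u v; rewrite rk kp pa.
  apply: (@part2 R _ _ _ _ g val aS bS J pn qn rE _ val_inj).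
  move=> v v'; rewrite /path_w; case: ifP => [/orP [/eqP e | /eqP e] _ | _]; last by rewrite eqxx.
    by left; exact: (esym e).
  by right; exact: (esym e).
Qed.
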